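(* For all retractable contracts $\rho,\sigma$: if $\rho$ is compliant with $\sigma$, then the judgment $\vartriangleright\rho\dashv\sigma$ (with empty assumption set) is derivable in the formal system for compliance.
   Context: Let $\mathcal N$ be a countable set of names and $\overline{\mathcal N}=\{\bar a\mid a\in\mathcal N\}$ a disjoint set of conames; $\alpha$ ranges over $\mathcal N\cup\overline{\mathcal N}$, with $\bar{\bar a}=a$. Retractable contracts are the closed expressions generated by $\sigma ::= \mathbf 1 \mid \sum_{i\in I} a_i.\sigma_i \ (\text{input}) \mid \sum_{i\in I}\bar a_i.\sigma_i\ (\text{retractable output}) \mid \bigoplus_{i\in I}\bar a_i.\sigma_i\ (\text{unretractable output}) \mid x \mid \mathsf{rec}\,x.\sigma$, where $I$ is non-empty and finite, names/conames in each choice are pairwise distinct, and $\sigma$ is not a variable in $\mathsf{rec}\,x.\sigma$. Choices are commutative; $\mathsf{rec}\,x.\sigma$ is identified with $\sigma[\mathsf{rec}\,x.\sigma/x]$. A unary $\bar a.\sigma$ may be read as either kind of output. Histories are stacks $\vec\gamma ::= [\,] \mid \vec\gamma:\sigma$ with $\sigma$ a retractable contract or the special symbol $\circ$. A contract with history is a pair $\langle\vec\gamma,\sigma\rangle$ with $\sigma$ a contract or $\circ$. Transitions: $\langle\vec\gamma,\alpha.\sigma+\sigma'\rangle\xrightarrow{\alpha}\langle\vec\gamma:\sigma',\sigma\rangle$ (for retractable choices, $+$ being input or retractable output sum); $\langle\vec\gamma,\bar a.\sigma\oplus\sigma'\rangle\xrightarrow{\tau}\langle\vec\gamma,\bar a.\sigma\rangle$;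 $\langle\vec\gamma,\alpha.\sigma\rangle\xrightarrow{\alpha}\langle\vec\gamma:\circ,\sigma\rangle$; $\langle\vec\gamma:\sigma',\sigma\rangle\xrightarrow{\mathsf{rb}}\langle\vec\gamma,\sigma'\rangle$. Client/server pairs $\langle\vec\delta,\rho\rangle\parallel\langle\vec\gamma,\sigma\rangle$ reduce by: (comm) if $\langle\vec\delta,\rho\rangle\xrightarrow{\alpha}\langle\vec\delta',\rho'\rangle$ and $\langle\vec\gamma,\sigma\rangle\xrightarrow{\bar\alpha}\langle\vec\gamma',\sigma'\rangle$ then the pair reduces to $\langle\vec\delta',\rho'\rangle\parallel\langle\vec\gamma',\sigma'\rangle$; ($\tau$) a $\tau$-transition of either component alone; (rbk) if both components do an $\mathsf{rb}$ transition and $\rho\neq\mathbf 1$, both roll back simultaneously; rule (rbk) applies only if neither (comm) nor ($\tau$) applies. Then $\langle\vec\delta,\rho\rangle$ is compliant with $\langle\vec\gamma,\sigma\rangle$ if whenever $\langle\vec\delta,\rho\rangle\parallel\langle\vec\gamma,\sigma\rangle$ reduces in finitely many steps to a pair $\langle\vec\delta',\rho'\rangle\parallel\langle\vec\gamma',\sigma'\rangle$ with no further reduction, we have $\rho'=\mathbf 1$. A contract $\rho$ is compliant with $\sigma$ if $\langle[\,],\rho\rangle$ is compliant with $\langle[\,],\sigma\rangle$. The formal system derives judgments $\Gamma\vartriangleright\rho\dashv\sigma$, $\Gamma$ a set of expressions $\rho'\dashv\sigma'$, as finite trees with rules (applied modulo fold/unfold of recursion): (Ax) $\Gamma\vartriangleright\mathbf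 1\dashv\sigma$; (Hyp) $\Gamma,\rho\dashv\sigma\vartriangleright\rho\dashv\sigma$; $(+,+)$ if $\rho=\sum_{i\in I}\alpha_i.\rho_i$, $\sigma=\sum_{j\in J}\bar\alpha_j.\sigma_j$ are retractable choices and $k\in I\cap J$, from $\Gamma,\rho\dashv\sigma\vartriangleright\rho_k\dashv\sigma_k$ infer $\Gamma\vartriangleright\rho\dashv\sigma$; $(\oplus,+)$ from $\Gamma,\bigoplus_{i\in I}\bar a_i.\rho_i\dashv\sum_{j\in I\cup J}a_j.\sigma_j\vartriangleright\rho_i\dashv\sigma_i$ for all $i\in I$ infer $\Gamma\vartriangleright\bigoplus_{i\in I}\bar a_i.\rho_i\dashv\sum_{j\in I\cup J}a_j.\sigma_j$; $(+,\oplus)$ symmetrically, from $\Gamma,\sum_{j\in I\cup J}a_j.\sigma_j\dashv\bigoplus_{i\in I}\bar a_i.\rho_i\vartriangleright\rho_i\dashv\sigma_i$ for all $i\in I$ infer $\Gamma\vartriangleright\sum_{j\in I\cup J}a_j.\sigma_j\dashv\bigoplus_{i\in I}\bar a_i.\rho_i$. *)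

(* Defs.v *)
From Stdlib Require Import List Arith Permutation Relations.
Import ListNotations.

Definition name := nat.

(* Kinds of choices: input sum, retractable output sum, unretractable output
   (internal) choice.  Conames are encoded by the polarity of the choice. *)
Inductive kind : Type := KIn | KROut | KUOut.

Inductive contract : Type :=
| One : contract
| Ch : kind -> list (name * contract) -> contract
| Var : nat -> contract
| Rec : nat -> contract -> contract.

Inductive wf_c : list nat -> contract -> Prop :=
| wf_one B : wf_c B One
| wf_ch B k l : l <> [] -> NoDup (map fst l) ->
    Forall (fun p => wf_c B (snd p)) l -> wf_c B (Ch k l)
| wf_var B x : In x B -> wf_c B (Var x)
| wf_rec B x s : (forall y, s <> Var y) -> wf_c (x :: B) s -> wf_c B (Rec x s).

Definition retractable (s : contract) : Prop := wf_c [] s.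

Inductive scoped : list nat -> contract -> Prop :=
| sc_one B : scoped B One
| sc_ch B k l : Forall (fun p => scoped B (snd p)) l -> scoped B (Ch k l)
| sc_var B x : In x B -> scoped B (Var x)
| sc_rec B x s : scoped (x :: B) s -> scoped B (Rec x s).

(* Substitution of a (closed) contract t for x; stops at rebinding of x. *)
Fixpoint subst (x : nat) (t : contract) (s : contract) : contract :=
  match s with
  | One => One
  | Ch k l => Ch k ((fix go (l : list (name * contract)) :=
                      match l with
                      | [] => []
                      | (a, u) :: l' => (a, subst x t u) :: go l'
                      end) l)
  | Var y => if Nat.eqb y x then t else Var y
  | Rec y b => if Nat.eqb y x then Rec y b else Rec y (subst x t b)
  end.

Inductive unf : contract -> contract -> Prop :=
| unf_refl s : unf s s
| unf_step x s t : unf (subst x (Rec x s) s) t -> unf (Rec x s) t.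

Definition is_one (s : contract) : Prop := unf s One.

Inductive ceq : contract -> contract -> Prop :=
| ceq_refl s : ceq s s
| ceq_sym s t : ceq s t -> ceq t s
| ceq_trans s t u : ceq s t -> ceq t u -> ceq s u
| ceq_unfold x s : scoped [] (Rec x s) -> ceq (Rec x s) (subst x (Rec x s) s)
| ceq_perm k l l' : Permutation l l' -> ceq (Ch k l) (Ch k l')
| ceq_branch k l l' :
    Forall2 (fun p q => fst p = fst q /\ ceq (snd p) (snd q)) l l' ->
    ceq (Ch k l) (Ch k l')
| ceq_rec x s s' : ceq s s' -> ceq (Rec x s) (Rec x s')
| ceq_unary a s : ceq (Ch KROut [(a, s)]) (Ch KUOut [(a, s)]).

Inductive label : Type := LIn (a : name) | LOut (a : name) | LTau | LRb.

Definition lab_of (k : kind) (a : name) : label :=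
  match k with KIn => LIn a | _ => LOut a end.

Definition dual (l : label) : label :=
  match l with LIn a => LOut a | LOut a => LIn a | x => x end.

(* Histories: stacks (head = top) of contracts or the symbol o (None).
   A contract with history: (history, contract-or-o). *)
Definition history := list (option contract).
Definition hstate := (history * option contract)%type.

Definition remove_branch (a : name) (l : list (name * contract)) :=
  filter (fun p => negb (Nat.eqb (fst p) a)) l.

Inductive trans : hstate -> label -> hstate -> Prop :=
| tr_retr h s k l a s' :
    unf s (Ch k l) -> k <> KUOut -> 2 <= length l -> In (a, s') l ->
    trans (h, Some s) (lab_of k a)
          (Some (Ch k (remove_branch a l)) :: h, Some s')
| tr_tau h s l a s' :
    unf s (Ch KUOut l) -> 2 <= length l -> In (a, s') l ->
    trans (h, Some s) LTau (h, Some (Ch KUOut [(a, s')]))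
| tr_unary h s k a s' :
    unf s (Ch k [(a, s')]) ->
    trans (h, Some s) (lab_of k a) (None :: h, Some s')
| tr_rb h s' s : trans (s' :: h, s) LRb (h, s').

Definition pair_state := (hstate * hstate)%type.

Inductive ct_step : pair_state -> pair_state -> Prop :=
| st_comm c c' d d' al :
    al <> LTau -> al <> LRb ->
    trans c al c' -> trans d (dual al) d' -> ct_step (c, d) (c', d')
| st_tau_l c c' d : trans c LTau c' -> ct_step (c, d) (c', d)
| st_tau_r c d d' : trans d LTau d' -> ct_step (c, d) (c, d').

Definition not_one (r : option contract) : Prop :=
  match r with Some s => ~ is_one s | None => True end.

Inductive step : pair_state -> pair_state -> Prop :=
| st_ct P Q : ct_step P Q -> step P Q
| st_rbk c c' d d' :
    trans c LRb c' -> trans d LRb d' -> not_one (snd c) ->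
    (forall Q, ~ ct_step (c, d) Q) ->
    step (c, d) (c', d').

Definition compliant_h (c d : hstate) : Prop :=
  forall c' d', clos_refl_trans _ step (c, d) (c', d') ->
    (forall Q, ~ step (c', d') Q) ->
    exists r, snd c' = Some r /\ is_one r.

Definition compliant (rho sigma : contract) : Prop :=
  compliant_h ([], Some rho) ([], Some sigma).

(* The formal system.  Gamma is a list of assumptions rho |- sigma;
   rule (conv) implements "modulo fold/unfold (and identification)". *)
Inductive derives : list (contract * contract) -> contract -> contract -> Prop :=
| d_conv G r r' s s' :
    ceq r r' -> ceq s s' -> derives G r' s' -> derives G r s
| d_ax G s : derives G One s
| d_hyp G r s : In (r, s) G -> derives G r s
| d_pp G kr ks lr ls a r' s' :
    ((kr = KIn /\ ks = KROut) \/ (kr = KROut /\ ks = KIn)) ->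
    In (a, r') lr -> In (a, s') ls ->
    derives ((Ch kr lr, Ch ks ls) :: G) r' s' ->
    derives G (Ch kr lr) (Ch ks ls)
| d_op G lr ls :
    (forall a r', In (a, r') lr ->
       exists s', In (a, s') ls /\
                  derives ((Ch KUOut lr, Ch KIn ls) :: G) r' s') ->
    derives G (Ch KUOut lr) (Ch KIn ls)
| d_po G ls lr :
    (forall a r', In (a, r') lr ->
       exists s', In (a, s') ls /\
                  derives ((Ch KIn ls, Ch KUOut lr) :: G) s' r') ->
    derives G (Ch KIn ls) (Ch KUOut lr).

(* Main.v *)
Require Import Defs.
From Stdlib Require Import List Arith Permutation Relations Lia Classical ClassicalEpsilon.
Import ListNotations.

Fixpoint cind (P : contract -> Prop) (H1 : P One)
  (H2 : forall k l, Forall (fun p => P (snd p)) l -> P (Ch k l))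
  (H3 : forall x, P (Var x)) (H4 : forall x s, P s -> P (Rec x s)) (s : contract) : P s :=
  match s with
  | One => H1
  | Ch k l => H2 k l ((fix go (l : list (name * contract)) : Forall (fun p => P (snd p)) l :=
       match l with [] => Forall_nil _ | p :: l' => Forall_cons p (cind P H1 H2 H3 H4 (snd p)) (go l') end) l)
  | Var x => H3 x
  | Rec x b => H4 x b (cind P H1 H2 H3 H4 b)
  end.

Lemma subst_ch x t k l : subst x t (Ch k l) = Ch k (map (fun p => (fst p, subst x t (snd p))) l).
Proof. simpl. f_equal. induction l as [|[a u] l IH]; simpl; congruence. Qed.

Definition env := nat -> option contract.
Definition rm (y : nat) (e : env) : env := fun z => if Nat.eqb z y then None else e z.
Definition ext (x : nat) (u : contract) (e : env) : env := fun z => if Nat.eqb z x then Some u else e z.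

Fixpoint msub (e : env) (s : contract) : contract :=
  match s with
  | One => One
  | Ch k l => Ch k (map (fun p => (fst p, msub e (snd p))) l)
  | Var y => match e y with Some u => u | None => Var y end
  | Rec y b => Rec y (msub (rm y e) b)
  end.
Lemma scoped_mono u : forall B B', (forall z, In z B -> In z B') -> scoped B u -> scoped B' u.
Proof.
  induction u as [| k l IH | x | x u IH] using cind; intros B B' Hi Hs; inversion Hs; subst; constructor.
  - rewrite Forall_forall in *. intros p Hp. eapply IH; eauto.
  - auto.
  - apply (IH (x :: B)); auto. intros z [->|Hz]; simpl; auto.
Qed.

Lemma subst_id u : forall B x t, scoped B u -> ~ In x B -> subst x t u = u.
Proof.
  induction u as [| k l IH | x | x u IH] using cind; intros B y t Hs Hn; inversion Hs; subst.
  - reflexivity.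
  - rewrite subst_ch. f_equal. 
    match goal with H : Forall _ l |- _ => rename H into Hf end.
    clear Hs. induction l as [|[a v] l IHl]; simpl; auto.
    inversion IH; inversion Hf; subst. simpl in *. f_equal.
    + f_equal. eauto.
    + apply IHl; auto.
  - simpl. destruct (Nat.eqb_spec x y); subst; tauto.
  - simpl. destruct (Nat.eqb_spec x y); auto. f_equal. apply (IH (x :: B)); auto.
    intros [->|H']; auto.
Qed.

Lemma msub_ext s : forall e e', (forall z, e z = e' z) -> msub e s = msub e' s.
Proof.
  induction s as [| k l IH | x | x u IH] using cind; intros e e' He; simpl; auto.
  - f_equal. induction l as [|[a v] l IHl]; simpl; auto. inversion IH; subst. f_equal; auto.
    simpl in *. f_equal. auto.
  - rewrite He; auto.
  - f_equal. apply IH. intros z. unfold rm. destruct (Nat.eqb z x); auto.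
Qed.

Definition closed u := scoped [] u.

Lemma lemmaA b : forall e x t, closed t -> (forall z u, e z = Some u -> closed u) ->
  subst x t (msub (rm x e) b) = msub (ext x t e) b.
Proof.
  induction b as [| k l IH | x | x b IH] using cind; intros e y t Ht He; simpl.
  - auto.
  - f_equal. induction l as [|[a v] l IHl]; simpl; auto. inversion IH; subst. simpl in *.
    f_equal; auto. f_equal. auto.
  - unfold rm, ext. destruct (Nat.eqb_spec x y); subst.
    + simpl. rewrite Nat.eqb_refl. auto.
    + destruct (e x) eqn:E.
      * eapply subst_id; [apply (He _ _ E)| simpl; auto].
      * simpl. destruct (Nat.eqb_spec x y); congruence.
  - destruct (Nat.eqb_spec x y); subst.
    + f_equal. apply msub_ext. intros z. unfold rm, ext. destruct (Nat.eqb z y); auto.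
    + f_equal. rewrite (msub_ext _ (rm x (rm y e)) (rm y (rm x e))).
      2:{ intros z. unfold rm. destruct (Nat.eqb z x), (Nat.eqb z y); auto. }
      rewrite IH; auto.
      * apply msub_ext. intros z. unfold rm, ext.
        destruct (Nat.eqb_spec z y), (Nat.eqb_spec z x); subst; auto. congruence.
      * intros z u. unfold rm. destruct (Nat.eqb z x); [congruence|eauto].
Qed.

Lemma msub_scoped v : forall B C e, scoped B v ->
  (forall z, In z B -> match e z with Some u => scoped C u | None => In z C end) ->
  scoped C (msub e v).
Proof.
  induction v as [| k l IH | x | x v IH] using cind; intros B C e Hs He; inversion Hs; subst; simpl.
  - constructor.
  - constructor. 
    match goal with H : Forall _ l |- _ => rename H into Hf end.
    rewrite Forall_forall in *. intros [a u] Hp.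
    apply in_map_iff in Hp as [[a' u'] [Heq Hin]]. inversion Heq; subst. simpl.
    specialize (IH _ Hin). specialize (Hf _ Hin). simpl in *. eauto.
  - match goal with H : In x B |- _ => specialize (He x H) end. destruct (e x); auto. constructor; auto.
  - constructor. apply (IH (x :: B)); auto. intros z Hz. unfold rm.
    destruct (Nat.eqb_spec z x); subst; simpl; auto.
    destruct Hz as [->|Hz]; [congruence|]. specialize (He z Hz). destruct (e z); auto.
    eapply scoped_mono; [|eauto]. simpl; auto.
Qed.
Fixpoint pos (s : contract) (e : env) : list (contract * env) :=
  (s, e) :: match s with
   | Ch k l => (fix go (l : list (name * contract)) := match l with [] => [] | p :: l' => pos (snd p) e ++ go l' end) l
   | Rec x b => pos b (ext x (msub e (Rec x b)) e)
   | _ => [] end.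

Lemma pos_self s e : In (s, e) (pos s e).
Proof. destruct s; simpl; auto. Qed.

Lemma pos_ch k l e a b : In (a, b) l -> incl (pos b e) (pos (Ch k l) e).
Proof.
  intros H p Hp. simpl. right. induction l as [|q l IH]; simpl in *; [tauto|].
  apply in_or_app. destruct H as [->|H]; auto.
Qed.

Lemma pos_rec x b e : incl (pos b (ext x (msub e (Rec x b)) e)) (pos (Rec x b) e).
Proof. intros p Hp. simpl. right. exact Hp. Qed.

Lemma pos_ch_inv k l e p : In p (pos (Ch k l) e) -> p = (Ch k l, e) \/ exists a b, In (a, b) l /\ In p (pos b e).
Proof.
  simpl. intros [H|H]; auto. right. induction l as [|[a u] l IHl]; simpl in H; [tauto|].
  apply in_app_or in H. destruct H as [H|H].
  - exists a, u. simpl; auto.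
  - destruct (IHl H) as [a' [b' [H1 H2]]]. exists a', b'. simpl; auto.
Qed.

Lemma pos_trans s : forall e v e', In (v, e') (pos s e) -> incl (pos v e') (pos s e).
Proof.
  induction s as [| k l IH | x | x b IH] using cind; intros e v e' H.
  - simpl in H. destruct H as [H|[]]. inversion H; subst. apply incl_refl.
  - apply pos_ch_inv in H. destruct H as [H|[a [b [Hab H]]]]. { inversion H; subst. apply incl_refl. }
    rewrite Forall_forall in IH. eapply incl_tran. { eapply (IH (a,b) Hab). exact H. }
    eapply pos_ch; eauto.
  - simpl in H. destruct H as [H|[]]. inversion H; subst. apply incl_refl.
  - simpl in H. destruct H as [H|H]. { inversion H; subst. apply incl_refl. }
    eapply incl_tran. { eapply IH. exact H. } apply pos_rec.
Qed.

Lemma wf_scoped s : forall B, wf_c B s -> scoped B s.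
Proof.
  induction s as [| k l IH | x | x b IH] using cind; intros B H; inversion H; subst; constructor; auto.
  match goal with H : Forall _ l |- _ => rename H into Hf end.
  rewrite Forall_forall in *. intros p Hp. apply IH; auto.
Qed.

Section F.
Variable r0 : contract.
Hypothesis Hr0 : wf_c [] r0.
Definition e0 : env := fun _ => None.

Definition Qinv (p : contract * env) : Prop :=
  let (v, e) := p in
  In (v, e) (pos r0 e0) /\ (exists B, wf_c B v /\ forall z, In z B -> e z <> None) /\
  (forall z u, e z = Some u -> closed u /\ exists x w e', In (Rec x w, e') (pos r0 e0) /\ u = msub e' (Rec x w)).

Lemma msub_closed B v e : wf_c B v -> (forall z, In z B -> e z <> None) ->
  (forall z u, e z = Some u -> closed u) -> closed (msub e v).
Proof.
  intros Hw HB Hc. eapply msub_scoped. apply wf_scoped; eauto.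
  intros z Hz. specialize (HB z Hz). destruct (e z) eqn:E; [eapply Hc; eauto| congruence].
Qed.

Lemma Qinv_all s : forall e, Qinv (s, e) -> forall p, In p (pos s e) -> Qinv p.
Proof.
  induction s as [| k l IH | x | x b IH] using cind; intros e HQ p Hp.
  - simpl in Hp. destruct Hp as [<-|[]]; auto.
  - destruct HQ as [Hin [[B [Hw HB]] Hv]].
    inversion Hw; subst.
    match goal with H : Forall _ l |- _ => rename H into Hf end.
    assert (Hsub : forall a u, In (a, u) l -> Qinv (u, e)).
    { intros a u Hau. split; [|split].
      - eapply pos_trans; [exact Hin|]. eapply pos_ch; [exact Hau|]. apply pos_self.
      - exists B. split; auto. rewrite Forall_forall in Hf. apply (Hf (a,u) Hau).
      - auto. }
    apply pos_ch_inv in Hp. destruct Hp as [Hp|[a [b [Hab Hp]]]].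
    { subst. split; [auto|split; [exists B; split; auto|auto]]. }
    rewrite Forall_forall in IH. eapply (IH (a,b) Hab); [|exact Hp]. eapply Hsub; eauto.
  - simpl in Hp. destruct Hp as [<-|[]]; auto.
  - simpl in Hp. destruct Hp as [<-|Hp]; auto.
    eapply IH; [|exact Hp].
    destruct HQ as [Hin [[B [Hw HB]] Hv]].
    inversion Hw; subst.
    split; [|split].
    + eapply pos_trans; [exact Hin|]. apply pos_rec. apply pos_self.
    + exists (x :: B). split; auto. intros z Hz. unfold ext.
      destruct (Nat.eqb_spec z x); [congruence|]. destruct Hz as [->|Hz]; [congruence|auto].
    + intros z u. unfold ext. destruct (Nat.eqb_spec z x).
      * intros Hu. inversion Hu; subst. split.
        -- change (closed (msub e (Rec x b))). eapply msub_closed; eauto. intros; eapply Hv; eauto.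
        -- exists x, b, e. split; auto.
      * intros Hu. eapply Hv; eauto.
Qed.

Lemma Qinv_pos v e : In (v, e) (pos r0 e0) -> Qinv (v, e).
Proof.
  intros H. eapply Qinv_all; [|exact H]. split; [apply pos_self|split].
  - exists []. split; auto.
  - unfold e0. congruence.
Qed.

Definition inF (u : contract) := exists v e, In (v, e) (pos r0 e0) /\ u = msub e v.

Lemma F_closed u : inF u -> closed u.
Proof.
  intros [v [e [Hin ->]]]. destruct (Qinv_pos v e Hin) as [_ [[B [Hw HB]] Hv]].
  eapply msub_closed; eauto. intros; eapply Hv; eauto.
Qed.

Lemma F_rec u : inF u -> forall x c, u = Rec x c ->
  exists b e, In (Rec x b, e) (pos r0 e0) /\ c = msub (rm x e) b.
Proof.
  intros [v [e [Hin ->]]] x c Hu. destruct v; simpl in Hu; try discriminate.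
  - destruct (Qinv_pos _ _ Hin) as [_ [_ Hv]]. destruct (e n) eqn:E; [|discriminate].
    destruct (Hv _ _ E) as [_ [x' [w [e' [Hin' ->]]]]]. simpl in Hu. inversion Hu; subst. eauto.
  - inversion Hu; subst. eauto.
Qed.

Lemma F_unfold x c : inF (Rec x c) -> inF (subst x (Rec x c) c).
Proof.
  intros HF. pose proof (F_closed _ HF) as Hc.
  destruct (F_rec _ HF x c eq_refl) as [b [e [Hin ->]]].
  destruct (Qinv_pos _ _ Hin) as [_ [_ Hv]].
  rewrite lemmaA; auto. 2:{ intros; eapply Hv; eauto. }
  exists b, (ext x (Rec x (msub (rm x e) b)) e). split; auto.
  eapply pos_trans; [exact Hin|]. apply pos_rec. apply pos_self.
Qed.

Lemma F_branch k l a c : inF (Ch k l) -> In (a, c) l -> inF c.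
Proof.
  intros [v [e [Hin Hu]]] Hal. destruct v; simpl in Hu; try discriminate.
  - inversion Hu; subst. apply in_map_iff in Hal as [[a' u'] [Heq Hin']].
    inversion Heq; subst. exists u', e. split; auto.
    eapply pos_trans; [exact Hin|]. eapply pos_ch; [exact Hin'|]. apply pos_self.
  - destruct (Qinv_pos _ _ Hin) as [_ [_ Hv]]. destruct (e n) eqn:E; [|discriminate].
    destruct (Hv _ _ E) as [_ [x' [w [e' [Hin' ->]]]]]. simpl in Hu. discriminate.
Qed.

Fixpoint rd (v : contract) : nat := match v with Rec _ b => S (rd b) | _ => 0 end.

Definition hnf (h : contract) := h = One \/ exists k l, h = Ch k l.

Lemma F_hnf_aux n : forall v e, rd v <= n -> (forall y, v <> Var y) -> In (v, e) (pos r0 e0) ->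
  exists h, unf (msub e v) h /\ hnf h.
Proof.
  induction n; intros v e Hn Hnv Hin.
  - destruct v; simpl in Hn; try lia.
    + exists One. split; [constructor| left; auto].
    + eexists. split; [constructor| right; simpl; eauto].
    + exfalso. eapply Hnv; eauto.
  - destruct v; try (apply (IHn _ e); simpl; auto; lia).
    destruct (Qinv_pos _ _ Hin) as [_ [[B [Hw HB]] Hv]].
    inversion Hw; subst.
    simpl. 
    destruct (IHn v (ext n0 (msub e (Rec n0 v)) e)) as [h [Hu Hh]].
    + simpl in Hn; lia.
    + auto.
    + eapply pos_trans; [exact Hin|]. apply pos_rec. apply pos_self.
    + exists h. split; auto. constructor. simpl in Hu. rewrite lemmaA; auto.
      * eapply (msub_closed _ (Rec n0 v)); eauto. intros; eapply Hv; eauto.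
      * intros; eapply Hv; eauto.
Qed.

Lemma F_hnf u : inF u -> exists h, unf u h /\ hnf h.
Proof.
  intros [v [e [Hin ->]]]. destruct v.
  - eapply F_hnf_aux; eauto. congruence.
  - eapply F_hnf_aux; eauto. congruence.
  - destruct (Qinv_pos _ _ Hin) as [_ [[B [Hw HB]] Hv]]. simpl.
    destruct (e n) eqn:E.
    + destruct (Hv _ _ E) as [_ [x' [w [e' [Hin' ->]]]]].
      eapply F_hnf_aux; eauto. congruence.
    + inversion Hw; subst. exfalso. eapply HB; eauto.
  - eapply F_hnf_aux; eauto. congruence.
Qed.

Lemma F_unf u w : unf u w -> inF u -> ceq u w /\ inF w.
Proof.
  induction 1 as [s|x s t Hu IH]; intros HF.
  - split; auto. constructor.
  - pose proof (F_unfold _ _ HF) as HF'. destruct (IH HF') as [Hc Hw]. split; auto.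
    eapply ceq_trans; [|exact Hc]. apply ceq_unfold. apply F_closed; auto.
Qed.

Lemma F_start : inF r0.
Proof.
  exists r0, e0. split; [apply pos_self|].
  symmetry. assert (forall s B, scoped B s -> forall e, (forall z, In z B -> e z = None) -> msub e s = s).
  { clear. induction s as [| k l IH | x | x b IH] using cind; intros B Hs e He; inversion Hs; subst; simpl; auto.
    - f_equal. match goal with H : Forall _ l |- _ => rename H into Hf end. clear Hs.
      induction l as [|[a u] l IHl]; simpl; auto. inversion IH; inversion Hf; subst. f_equal; auto.
      simpl in *. f_equal. eauto.
    - rewrite He; auto.
    - f_equal. apply (IH (x :: B)); auto. intros z [->|Hz]; unfold rm.
      + rewrite Nat.eqb_refl; auto.
      + destruct (Nat.eqb z x); auto. }
  eapply H. apply wf_scoped; eauto. intros z [].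
Qed.

End F.
Definition stuck (P : pair_state) := forall Q, ~ step P Q.
Definition good (c : hstate) := exists r, snd c = Some r /\ is_one r.
Definition NC (P : pair_state) := exists c' d', clos_refl_trans _ step P (c', d') /\ stuck (c', d') /\ ~ good c'.

Lemma compl_NC c d : compliant_h c d -> ~ NC (c, d).
Proof.
  intros H [c' [d' [Hr [Hs Hg]]]]. apply Hg. destruct (H c' d' Hr Hs) as [r [H1 H2]]. exists r; auto.
Qed.

Lemma NC_rt P Q : clos_refl_trans _ step P Q -> NC Q -> NC P.
Proof. intros H [c' [d' [Hr [Hs Hg]]]]. exists c', d'. split; auto. eapply rt_trans; eauto. Qed.

Lemma NC_back P Q : step P Q -> NC Q -> NC P.
Proof. intros H. apply NC_rt. apply rt_step; auto. Qed.

Lemma NC_stuck c d : stuck (c, d) -> ~ good c -> NC (c, d).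
Proof. intros. exists c, d. split; auto. apply rt_refl. Qed.

Lemma trans_lift c l c' b : trans c l c' -> trans (fst c ++ b, snd c) l (fst c' ++ b, snd c').
Proof. intros H. destruct H; simpl; econstructor; eauto. Qed.

Lemma trans_unlift c l c' h : trans c l c' -> l <> LRb -> exists c'', trans (h, snd c) l c''.
Proof.
  intros H Hl. destruct H; simpl; try congruence; eexists;
  [eapply tr_retr|eapply tr_tau|eapply tr_unary]; eauto.
Qed.

Lemma trans_len c l c' : trans c l c' ->
  (l = LTau /\ fst c' = fst c) \/ (l = LRb /\ length (fst c) = S (length (fst c'))) \/
  (l <> LTau /\ l <> LRb /\ length (fst c') = S (length (fst c))).
Proof.
  intros H. destruct H; simpl; auto; right; right; destruct k; simpl; repeat split; congruence.
Qed.

Definition lift (b1 b2 : history) (P : pair_state) : pair_state :=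
  ((fst (fst P) ++ b1, snd (fst P)), (fst (snd P) ++ b2, snd (snd P))).

Lemma ct_step_lift b1 b2 P Q : ct_step P Q -> ct_step (lift b1 b2 P) (lift b1 b2 Q).
Proof.
  intros H. destruct H; unfold lift; simpl.
  - eapply st_comm; eauto; apply trans_lift; auto.
  - apply st_tau_l. apply (trans_lift c _ c'); auto.
  - apply st_tau_r. apply (trans_lift d _ d'); auto.
Qed.

Lemma ct_step_unlift b1 b2 P Q : ct_step (lift b1 b2 P) Q -> exists Q', ct_step P Q'.
Proof.
  destruct P as [[h1 x] [h2 y]]. unfold lift; simpl. intros H.
  inversion H as [c c' d d' al Hal1 Hal2 Hc Hd| c c' d Hc | c d d' Hd]; subst.
  - destruct (trans_unlift _ _ _ h1 Hc Hal2) as [c1 Hc1].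
    assert (dual al <> LRb) by (destruct al; simpl; congruence).
    destruct (trans_unlift _ _ _ h2 Hd H0) as [d1 Hd1].
    eexists. eapply st_comm; eauto.
  - destruct (trans_unlift _ _ _ h1 Hc) as [c1 Hc1]; [congruence|]. eexists. apply st_tau_l; eauto.
  - destruct (trans_unlift _ _ _ h2 Hd) as [d1 Hd1]; [congruence|]. eexists. apply st_tau_r; eauto.
Qed.

Lemma step_lift b1 b2 P Q : step P Q -> step (lift b1 b2 P) (lift b1 b2 Q).
Proof.
  intros H. destruct H.
  - apply st_ct. apply ct_step_lift; auto.
  - unfold lift; simpl. apply st_rbk.
    + apply (trans_lift c _ c'); auto.
    + apply (trans_lift d _ d'); auto.
    + auto.
    + intros Q HQ. destruct (ct_step_unlift b1 b2 (c, d) Q HQ) as [Q' HQ']. eapply H2; eauto.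
Qed.

Lemma rt_lift b1 b2 P Q : clos_refl_trans _ step P Q -> clos_refl_trans _ step (lift b1 b2 P) (lift b1 b2 Q).
Proof.
  induction 1.
  - apply rt_step. apply step_lift; auto.
  - apply rt_refl.
  - eapply rt_trans; eauto.
Qed.

Definition eqlen (P : pair_state) := length (fst (fst P)) = length (fst (snd P)).

Lemma step_eqlen P Q : step P Q -> eqlen P -> eqlen Q.
Proof.
  unfold eqlen. intros H. destruct H as [P Q H|c c' d d' H1 H2 _ _].
  - destruct H as [c c' d d' al Ha Hb H1 H2|c c' d H1|c d d' H1]; simpl.
    + destruct (trans_len _ _ _ H1) as [[? ?]|[[? ?]|[? [? E1]]]]; try congruence;
      destruct (trans_len _ _ _ H2) as [[? ?]|[[? ?]|[? [? E2]]]];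
        try (destruct al; simpl in *; congruence); intros; lia.
    + destruct (trans_len _ _ _ H1) as [[? E]|[[? ?]|[? [? ?]]]]; try congruence.
    + destruct (trans_len _ _ _ H1) as [[? E]|[[? ?]|[? [? ?]]]]; try congruence.
  - simpl. destruct (trans_len _ _ _ H1) as [[? ?]|[[? E1]|[? [? ?]]]]; try congruence;
    destruct (trans_len _ _ _ H2) as [[? ?]|[[? E2]|[? [? ?]]]]; try congruence; intros; lia.
Qed.

Lemma rt_eqlen P Q : clos_refl_trans _ step P Q -> eqlen P -> eqlen Q.
Proof. induction 1; auto. apply step_eqlen; auto. Qed.

Lemma not_good_not_one c : ~ good c -> not_one (snd c).
Proof.
  destruct c as [h [r|]]; simpl; auto. intros H Hr. apply H. exists r; auto.
Qed.

Lemma NC_sub P0 a1 a2 x y : clos_refl_trans _ step P0 (([a1], x), ([a2], y)) ->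
  NC (([], x), ([], y)) -> NC (([], a1), ([], a2)) -> NC P0.
Proof.
  intros H0 [c' [d' [Hr [Hs Hg]]]] Hn. eapply NC_rt; [exact H0|].
  pose proof (rt_eqlen _ _ Hr eq_refl) as El. unfold eqlen in El; simpl in El.
  destruct c' as [h1 x'], d' as [h2 y']. simpl in El.
  destruct h1 as [|z1 h1].
  - destruct h2 as [|z2 h2]; [|simpl in El; discriminate].
    pose proof (rt_lift [a1] [a2] _ _ Hr) as Hl. unfold lift in Hl; simpl in Hl.
    eapply NC_rt; [exact Hl|]. eapply NC_back; [|exact Hn].
    apply st_rbk; try constructor.
    + apply not_good_not_one in Hg. exact Hg.
    + intros Q HQ. 
      destruct (ct_step_unlift [a1] [a2] (([], x'), ([], y')) Q HQ) as [Q' HQ'].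
      eapply Hs. apply st_ct. eauto.
  - destruct h2 as [|z2 h2]; [simpl in El; discriminate|].
    exfalso. eapply Hs. apply st_rbk; try constructor.
    + apply not_good_not_one in Hg. exact Hg.
    + intros Q HQ. eapply Hs. apply st_ct. eauto.
Qed.

Lemma trans_none h l c : trans (h, None) l c -> l = LRb.
Proof. intros H. inversion H; auto. Qed.

Lemma unf_ch k l X : unf (Ch k l) X -> X = Ch k l.
Proof. intros H. inversion H; auto. Qed.

Lemma unf_trans s t u : unf s t -> unf t u -> unf s u.
Proof. induction 1; intros; auto. constructor. auto. Qed.

Lemma unf_det s X Y : unf s X -> unf s Y -> unf X Y \/ unf Y X.
Proof.
  intros H. revert Y. induction H as [s|x s t Hu IH]; intros Y HY.
  - left; auto.
  - inversion HY; subst.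
    + right. constructor. auto.
    + apply IH; auto.
Qed.

Lemma unf_ch_uniq s k l k' l' : unf s (Ch k l) -> unf s (Ch k' l') -> k = k' /\ l = l'.
Proof.
  intros H1 H2. destruct (unf_det _ _ _ H1 H2) as [H|H]; apply unf_ch in H; inversion H; auto.
Qed.

Lemma unf_ch_notone s k l : unf s (Ch k l) -> ~ is_one s.
Proof.
  intros H1 H2. unfold is_one in H2. destruct (unf_det _ _ _ H1 H2) as [H|H].
  - apply unf_ch in H. discriminate.
  - inversion H.
Qed.

Lemma tau_shape h x c : trans (h, x) LTau c -> fst c = h /\
  exists s l a s', x = Some s /\ unf s (Ch KUOut l) /\ 2 <= length l /\ In (a, s') l /\ snd c = Some (Ch KUOut [(a, s')]).
Proof.
  intros H. inversion H; subst; simpl.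
  - destruct k; simpl in *; congruence.
  - split; auto. do 4 eexists; eauto.
  - destruct k; simpl in *; congruence.
Qed.

Lemma lab_shape h s al c : trans (h, Some s) al c -> al <> LTau -> al <> LRb ->
  exists k l a s', unf s (Ch k l) /\ In (a, s') l /\ al = lab_of k a /\
    (snd c = Some s').
Proof.
  intros H H1 H2. inversion H; subst; try congruence.
  - do 4 eexists; eauto.
  - do 4 eexists; split; eauto. split; [simpl; eauto| auto].
Qed.

Lemma no_tau_unary h p c : ~ trans (h, Some (Ch KUOut [p])) LTau c.
Proof.
  intros H. apply tau_shape in H as [_ [s [l [a [s' [E [Hu [Hl _]]]]]]]].
  inversion E; subst. apply unf_ch in Hu. inversion Hu; subst. simpl in Hl. lia.
Qed.

Lemma no_rb_empty x c : ~ trans ([], x) LRb c.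
Proof.
  intros H. remember LRb as l. remember ([], x) as c0. destruct H; try discriminate;
  destruct k; discriminate.
Qed.

Definition tc (x x1 : option contract) := x1 = x \/ trans ([], x) LTau ([], x1).
Definition nocomm x y := forall al c d, al <> LTau -> al <> LRb -> trans ([], x) al c -> trans ([], y) (dual al) d -> False.

Lemma pick x : exists x', tc x x' /\ forall c, ~ trans ([], x') LTau c.
Proof.
  destruct (classic (exists x1, trans ([], x) LTau ([], x1))) as [[x1 Hx1]|Hn].
  - exists x1. split; [right; auto|]. intros c Hc.
    apply tau_shape in Hx1 as [_ [s [l [a [s' [_ [_ [_ [_ E]]]]]]]]]. simpl in E. subst.
    eapply no_tau_unary; eauto.
  - exists x. split; [left; auto|]. intros c Hc. apply Hn.
    destruct c as [h x1]. pose proof (tau_shape _ _ _ Hc) as [E _]. simpl in E; subst. eauto.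
Qed.

Lemma NC_tau_then x y : (forall x1 y1, tc x x1 -> tc y y1 -> nocomm x1 y1) ->
  (forall x1, tc x x1 -> ~ good ([], x1)) -> NC (([], x), ([], y)).
Proof.
  intros Hc Hg. destruct (pick x) as [x1 [Hx1 Hnx]]. destruct (pick y) as [y1 [Hy1 Hny]].
  apply (NC_rt _ (([], x1), ([], y))).
  { destruct Hx1 as [->|Hx1]; [apply rt_refl|]. apply rt_step. apply st_ct. apply st_tau_l. auto. }
  apply (NC_rt _ (([], x1), ([], y1))).
  { destruct Hy1 as [->|Hy1]; [apply rt_refl|]. apply rt_step. apply st_ct. apply st_tau_r. auto. }
  apply NC_stuck; [|auto]. intros Q HQ. inversion HQ; subst.
  - inversion H; subst.
    + eapply Hc; eauto.
    + eapply Hnx; eauto.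
    + eapply Hny; eauto.
  - eapply no_rb_empty; eauto.
Qed.

Lemma NC_none y : NC (([], None), ([], y)).
Proof.
  apply NC_tau_then.
  - intros x1 y1 [->|Hx] _ al c d H1 H2 Ht _.
    + apply trans_none in Ht. congruence.
    + apply tau_shape in Hx as [_ [s [_ [_ [_ [E _]]]]]]. discriminate.
  - intros x1 [->|Hx] [r [E _]]; simpl in E; [discriminate|].
    apply tau_shape in Hx as [_ [s [_ [_ [_ [E' _]]]]]]. discriminate.
Qed.
Definition NCs r s := NC (([], Some r), ([], Some s)).

Lemma tc_fixed s k l x1 : unf s (Ch k l) -> (k <> KUOut \/ length l < 2) -> tc (Some s) x1 -> x1 = Some s.
Proof.
  intros Hu Hk [->|Ht]; auto.
  apply tau_shape in Ht as [_ [s0 [l' [a [s' [E [Hu' [Hl _]]]]]]]]. inversion E; subst.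
  destruct (unf_ch_uniq _ _ _ _ _ Hu Hu') as [-> ->]. destruct Hk; [congruence|lia].
Qed.

Lemma tc_lab s k l x1 al c : unf s (Ch k l) -> tc (Some s) x1 -> trans ([], x1) al c ->
  al <> LTau -> al <> LRb -> exists a, al = lab_of k a.
Proof.
  intros Hu [->|Ht] Htr H1 H2.
  - destruct (lab_shape _ _ _ _ Htr H1 H2) as [k' [l' [a [s' [Hu' [_ [-> _]]]]]]].
    destruct (unf_ch_uniq _ _ _ _ _ Hu Hu') as [-> ->]. eauto.
  - apply tau_shape in Ht as [_ [s0 [l' [a [s' [E [Hu' [Hl [_ E2]]]]]]]]]. inversion E; subst.
    simpl in E2. subst.
    destruct (unf_ch_uniq _ _ _ _ _ Hu Hu') as [-> ->].
    destruct (lab_shape _ _ _ _ Htr H1 H2) as [k' [l'' [b [s'' [Hu'' [_ [-> _]]]]]]].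
    apply unf_ch in Hu''. inversion Hu''; subst. eauto.
Qed.

Lemma tc_notgood s k l x1 : unf s (Ch k l) -> tc (Some s) x1 -> ~ good ([], x1).
Proof.
  intros Hu [->|Ht] [r [E Hr]]; simpl in E.
  - inversion E; subst. eapply unf_ch_notone; eauto.
  - apply tau_shape in Ht as [_ [s0 [l' [a [s' [_ [_ [_ [_ E2]]]]]]]]]. simpl in E2. subst.
    inversion E; subst. eapply unf_ch_notone; [constructor|eauto].
Qed.

Lemma no_trans_one t h al c : unf t One -> trans (h, Some t) al c -> al = LRb.
Proof.
  intros Hu Ht. inversion Ht; subst; auto;
  match goal with H : unf t (Ch _ _) |- _ => destruct (unf_det _ _ _ Hu H) as [X|X] end;
  inversion X.
Qed.

Lemma L_one s t k l : unf s (Ch k l) -> unf t One -> NCs s t.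
Proof.
  intros Hs Ht. apply NC_tau_then.
  - intros x1 y1 Hx [->|Hy] al c d H1 H2 _ Hd.
    + apply no_trans_one in Hd; auto. destruct al; simpl in *; congruence.
    + apply tau_shape in Hy as [_ [s0 [l' [_ [_ [E [Hu' _]]]]]]]. inversion E; subst.
      destruct (unf_det _ _ _ Ht Hu') as [X|X]; inversion X.
  - intros x1 Hx1. exact (tc_notgood _ _ _ _ Hs Hx1).
Qed.

Lemma L_nocomm s t kr lr ks ls : unf s (Ch kr lr) -> unf t (Ch ks ls) -> (kr = KIn <-> ks = KIn) -> NCs s t.
Proof.
  intros Hs Ht Hk. apply NC_tau_then.
  - intros x1 y1 Hx Hy al c d H1 H2 Hc Hd.
    destruct (tc_lab _ _ _ _ _ _ Hs Hx Hc H1 H2) as [a Ea].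
    assert (dual al <> LTau /\ dual al <> LRb) as [H3 H4] by (destruct al; simpl; split; congruence).
    destruct (tc_lab _ _ _ _ _ _ Ht Hy Hd H3 H4) as [b Eb]. subst.
    destruct kr, ks; simpl in *; try discriminate; destruct Hk as [Hk1 Hk2];
      try (specialize (Hk1 eq_refl); discriminate); try (specialize (Hk2 eq_refl); discriminate).
  - intros x1 Hx1. exact (tc_notgood _ _ _ _ Hs Hx1).
Qed.

Lemma KIn_neq : KIn <> KUOut. Proof. discriminate. Qed.

Lemma filt_le {A} (f : A -> bool) l : length (filter f l) <= length l.
Proof. induction l; simpl; auto. destruct (f a); simpl; lia. Qed.

Lemma filt_lt {A} (f : A -> bool) l x : In x l -> f x = false -> length (filter f l) < length l.
Proof.
  induction l as [|y l IH]; simpl; [tauto|]. intros [->|H] Hf.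
  - rewrite Hf. pose proof (filt_le f l). lia.
  - specialize (IH H Hf). destruct (f y); simpl; lia.
Qed.

Lemma rem_len a (l : list (name * contract)) : (exists r, In (a, r) l) -> length (remove_branch a l) < length l.
Proof.
  intros [r H]. unfold remove_branch. eapply filt_lt; [exact H|]. simpl. rewrite Nat.eqb_refl. auto.
Qed.

Lemma rem_in a l p : In p (remove_branch a l) -> In p l.
Proof. unfold remove_branch. intros H. apply filter_In in H. tauto. Qed.

Lemma client_step s k l a r' : unf s (Ch k l) -> k <> KUOut -> In (a, r') l ->
  exists a1, trans ([], Some s) (lab_of k a) ([a1], Some r') /\
    (a1 = None \/ a1 = Some (Ch k (remove_branch a l))).
Proof.
  intros Hu Hk Hin. destruct (le_lt_dec 2 (length l)).
  - eexists. split; [eapply tr_retr; eauto| right; eauto].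
  - destruct l as [|p [|q rest]]; simpl in *; [contradiction| |lia].
    destruct Hin as [-> | []]. eexists. split; [eapply tr_unary; eauto| left; eauto].
Qed.

Lemma NC_rem_none s k l : unf s (Ch k l) -> k <> KUOut -> NC (([], Some s), ([], None)).
Proof.
  intros Hu Hk. apply NC_tau_then.
  - intros x1 y1 _ [->|Hy] al c d H1 H2 _ Hd.
    + apply trans_none in Hd. destruct al; simpl in *; congruence.
    + apply tau_shape in Hy as [_ [s0 [_ [_ [_ [E _]]]]]]. discriminate.
  - intros x1 Hx1. exact (tc_notgood _ _ _ _ Hu Hx1).
Qed.

Lemma L_pp n : forall lr ls s t kr ks, length lr <= n ->
  ((kr = KIn /\ ks = KROut) \/ (kr = KROut /\ ks = KIn)) ->
  unf s (Ch kr lr) -> unf t (Ch ks ls) ->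
  (forall a r' s', In (a, r') lr -> In (a, s') ls -> NCs r' s') -> NCs s t.
Proof.
  induction n as [|n IH]; intros lr ls s t kr ks Hn Hk Hs Ht Hall.
  all: destruct (classic (exists a r' s', In (a, r') lr /\ In (a, s') ls)) as [[a [r' [s' [Hr Hs']]]]|Hno].
  2,4: apply NC_tau_then; [|intros x1 Hx1; exact (tc_notgood _ _ _ _ Hs Hx1)];
    intros x1 y1 Hx Hy al c d H1 H2 Hc Hd;
    assert (Ekr : kr <> KUOut) by (destruct Hk as [[-> ->]|[-> ->]]; congruence);
    assert (Eks : ks <> KUOut) by (destruct Hk as [[-> ->]|[-> ->]]; congruence);
    rewrite (tc_fixed _ _ _ _ Hs (or_introl Ekr) Hx) in Hc;
    rewrite (tc_fixed _ _ _ _ Ht (or_introl Eks) Hy) in Hd;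
    destruct (lab_shape _ _ _ _ Hc H1 H2) as [k1 [l1 [a [r1 [Hu1 [Hi1 [E1 _]]]]]]];
    destruct (unf_ch_uniq _ _ _ _ _ Hs Hu1) as [<- <-];
    assert (dual al <> LTau /\ dual al <> LRb) as [H3 H4] by (destruct al; simpl; split; congruence);
    destruct (lab_shape _ _ _ _ Hd H3 H4) as [k2 [l2 [b [s2 [Hu2 [Hi2 [E2 _]]]]]]];
    destruct (unf_ch_uniq _ _ _ _ _ Ht Hu2) as [<- <-];
    subst; apply Hno; exists a, r1, s2; split; auto;
    destruct Hk as [[-> ->]|[-> ->]]; simpl in E2; inversion E2; subst; auto.
  1: simpl in Hn; destruct lr; [contradiction|simpl in Hn; lia].
  assert (Ekr : kr <> KUOut) by (destruct Hk as [[-> ->]|[-> ->]]; congruence).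
  assert (Eks : ks <> KUOut) by (destruct Hk as [[-> ->]|[-> ->]]; congruence).
  destruct (client_step _ _ _ _ _ Hs Ekr Hr) as [a1 [Hc Ha1]].
  destruct (client_step _ _ _ _ _ Ht Eks Hs') as [a2 [Hd Ha2]].
  eapply NC_sub.
  - apply rt_step. apply st_ct. eapply st_comm; [| |exact Hc|].
    + destruct kr; simpl; congruence.
    + destruct kr; simpl; congruence.
    + destruct Hk as [[-> ->]|[-> ->]]; exact Hd.
  - apply Hall with a; auto.
  - destruct Ha1 as [-> | ->]; [apply NC_none|].
    destruct Ha2 as [-> | ->]; [eapply NC_rem_none; [constructor|auto]|].
    eapply (IH (remove_branch a lr) (remove_branch a ls) _ _ kr ks); auto; try constructor.
    + pose proof (rem_len a lr (ex_intro _ r' Hr)). unfold name in *. lia.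
    + intros b r1 s1 H1 H2. apply rem_in in H1. apply rem_in in H2. eauto.
Qed.

Lemma L_op1 z t a r' ls : unf z (Ch KUOut [(a, r')]) -> unf t (Ch KIn ls) ->
  (forall s', In (a, s') ls -> NCs r' s') -> NCs z t.
Proof.
  intros Hz Ht Hall. destruct (classic (exists s', In (a, s') ls)) as [[s' Hs']|Hno].
  - destruct (client_step _ _ _ _ _ Ht KIn_neq Hs') as [a2 [Hd _]].
    eapply NC_sub.
    + apply rt_step. apply st_ct. eapply st_comm; [| |eapply tr_unary; exact Hz| exact Hd]; simpl; congruence.
    + apply Hall; auto.
    + apply NC_none.
  - apply NC_tau_then; [|intros x1 Hx1; exact (tc_notgood _ _ _ _ Hz Hx1)].
    intros x1 y1 Hx Hy al c d H1 H2 Hc Hd.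
    rewrite (tc_fixed _ _ _ _ Hz (or_intror (le_n 2)) Hx) in Hc.
    rewrite (tc_fixed _ _ _ _ Ht (or_introl KIn_neq) Hy) in Hd.
    destruct (lab_shape _ _ _ _ Hc H1 H2) as [k1 [l1 [b [r1 [Hu1 [Hi1 [E1 _]]]]]]].
    destruct (unf_ch_uniq _ _ _ _ _ Hz Hu1) as [<- <-].
    destruct Hi1 as [Hi1|[]]. inversion Hi1; subst.
    simpl in H1, H2 |- *.
    destruct (lab_shape _ _ _ _ Hd ltac:(simpl; congruence) ltac:(simpl; congruence)) as [k2 [l2 [b2 [s2 [Hu2 [Hi2 [E2 _]]]]]]].
    destruct (unf_ch_uniq _ _ _ _ _ Ht Hu2) as [<- <-].
    simpl in E2. inversion E2; subst. eauto.
Qed.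

Lemma L_op s t lr ls a r' : unf s (Ch KUOut lr) -> In (a, r') lr -> unf t (Ch KIn ls) ->
  (forall s', In (a, s') ls -> NCs r' s') -> NCs s t.
Proof.
  intros Hs Hin Ht Hall. destruct (le_lt_dec 2 (length lr)) as [Hle|Hlt].
  - eapply NC_back.
    + apply st_ct. apply st_tau_l. eapply tr_tau; eauto.
    + eapply L_op1; eauto. constructor.
  - destruct lr as [|p [|q rest]]; simpl in *; [contradiction| |lia].
    destruct Hin as [-> | []]. eapply L_op1; eauto.
Qed.

Lemma L_po1 s t a s' lr : unf t (Ch KUOut [(a, s')]) -> unf s (Ch KIn lr) ->
  (forall r', In (a, r') lr -> NCs r' s') -> NCs s t.
Proof.
  intros Ht Hs Hall. destruct (classic (exists r', In (a, r') lr)) as [[r' Hr']|Hno].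
  - destruct (client_step _ _ _ _ _ Hs KIn_neq Hr') as [a1 [Hc Ha1]].
    eapply NC_sub.
    + apply rt_step. apply st_ct. eapply st_comm; [| |exact Hc| exact (tr_unary [] t KUOut a s' Ht)]; simpl; congruence.
    + apply Hall; auto.
    + destruct Ha1 as [-> | ->]; [apply NC_none|]. eapply NC_rem_none; [constructor|congruence].
  - apply NC_tau_then; [|intros x1 Hx1; exact (tc_notgood _ _ _ _ Hs Hx1)].
    intros x1 y1 Hx Hy al c d H1 H2 Hc Hd.
    rewrite (tc_fixed _ _ _ _ Hs (or_introl KIn_neq) Hx) in Hc.
    rewrite (tc_fixed _ _ _ _ Ht (or_intror (le_n 2)) Hy) in Hd.
    destruct (lab_shape _ _ _ _ Hc H1 H2) as [k1 [l1 [b [r1 [Hu1 [Hi1 [E1 _]]]]]]].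
    destruct (unf_ch_uniq _ _ _ _ _ Hs Hu1) as [<- <-].
    subst. simpl in Hd.
    destruct (lab_shape _ _ _ _ Hd ltac:(simpl; congruence) ltac:(simpl; congruence)) as [k2 [l2 [b' [s2 [Hu2 [Hi2 [E2 _]]]]]]].
    destruct (unf_ch_uniq _ _ _ _ _ Ht Hu2) as [<- <-].
    destruct Hi2 as [Hi2|[]]. inversion Hi2; subst.
    simpl in E2. inversion E2; subst. eauto.
Qed.

Lemma L_po s t lr ls a s' : unf t (Ch KUOut ls) -> In (a, s') ls -> unf s (Ch KIn lr) ->
  (forall r', In (a, r') lr -> NCs r' s') -> NCs s t.
Proof.
  intros Ht Hin Hs Hall. destruct (le_lt_dec 2 (length ls)) as [Hle|Hlt].
  - eapply NC_back.
    + apply st_ct. apply st_tau_r. eapply tr_tau; eauto.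
    + eapply L_po1; eauto. constructor.
  - destruct ls as [|p [|q rest]]; simpl in *; [contradiction| |lia].
    destruct Hin as [-> | []]. eapply L_po1; eauto.
Qed.
Definition Flist r0 := map (fun p : contract * env => msub (snd p) (fst p)) (pos r0 e0).

Lemma inF_Flist r0 u : inF r0 u -> In u (Flist r0).
Proof.
  intros [v [e [Hin ->]]]. unfold Flist. apply in_map_iff. exists (v, e). auto.
Qed.

Definition cnt r0 s0 (G : list (contract * contract)) :=
  length (filter (fun p => if excluded_middle_informative (In p G) then false else true)
    (list_prod (Flist r0) (Flist s0))).

Lemma filt_mono_lt {A} (f g : A -> bool) l x : (forall y, g y = true -> f y = true) ->
  In x l -> f x = true -> g x = false -> length (filter g l) < length (filter f l).
Proof.
  intros Hfg. induction l as [|y l IH]; simpl; [tauto|]. intros [->|H] Hf Hg.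
  - rewrite Hf, Hg. simpl.
    assert (forall l, length (filter g l) <= length (filter f l)).
    { clear - Hfg. induction l as [|y l IH]; simpl; auto. destruct (g y) eqn:E.
      - rewrite (Hfg y E). simpl. lia.
      - destruct (f y); simpl; lia. }
    specialize (H l). lia.
  - specialize (IH H Hf Hg). destruct (g y) eqn:E.
    + rewrite (Hfg y E). simpl. lia.
    + destruct (f y); simpl; lia.
Qed.

Lemma cnt_lt r0 s0 G p : In p (list_prod (Flist r0) (Flist s0)) -> ~ In p G -> cnt r0 s0 (p :: G) < cnt r0 s0 G.
Proof.
  intros H1 H2. unfold cnt. eapply filt_mono_lt; [|exact H1| |].
  - intros y. destruct (excluded_middle_informative (In y (p :: G))); [discriminate|].
    destruct (excluded_middle_informative (In y G)); auto. exfalso. apply n. simpl; auto.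
  - destruct (excluded_middle_informative (In p G)); tauto.
  - destruct (excluded_middle_informative (In p (p :: G))); auto. exfalso. apply n. simpl; auto.
Qed.

Lemma main r0 s0 (H1 : wf_c [] r0) (H2 : wf_c [] s0) n : forall G r s,
  cnt r0 s0 G <= n -> inF r0 r -> inF s0 s -> ~ NCs r s -> derives G r s.
Proof.
  induction n as [|n IH]; intros G r s Hc Hr Hs Hnc;
  destruct (F_hnf r0 H1 r Hr) as [hr [Hur [->|[kr [lr ->]]]]];
  destruct (F_unf r0 H1 _ _ Hur Hr) as [Cr Fr];
  try (eapply d_conv; [exact Cr|apply ceq_refl|apply d_ax]);
  destruct (F_hnf s0 H2 s Hs) as [hs [Hus [->|[ks [ls ->]]]]];
  try (exfalso; apply Hnc; eapply L_one; [exact Hur|exact Hus]);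
  destruct (F_unf s0 H2 _ _ Hus Hs) as [Cs Fs];
  (destruct (classic (In (Ch kr lr, Ch ks ls) G)) as [HG|HG];
   [eapply d_conv; [exact Cr|exact Cs|apply d_hyp; auto]|]);
  pose proof (cnt_lt r0 s0 G (Ch kr lr, Ch ks ls)
    ltac:(apply in_prod; apply inF_Flist; auto) HG) as Hlt.
  { lia. }
  assert (Hc' : cnt r0 s0 ((Ch kr lr, Ch ks ls) :: G) <= n) by lia.
  clear Hlt Hc.
  eapply d_conv; [exact Cr|exact Cs|].
  destruct kr, ks;
  try (exfalso; apply Hnc; eapply L_nocomm; [exact Hur|exact Hus|split; intro; discriminate]);
  try (exfalso; apply Hnc; eapply L_nocomm; [exact Hur|exact Hus|split; intro; reflexivity]).
  -
    destruct (classic (exists a r' s', In (a, r') lr /\ In (a, s') ls /\ ~ NCs r' s')) as [[a [r' [s' [Ha [Hb Hn]]]]]|Hno].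
    + eapply d_pp; [left; split; reflexivity|exact Ha|exact Hb|].
      apply IH; auto; eapply F_branch; eauto.
    + exfalso. apply Hnc. eapply (L_pp (length lr) lr ls r s KIn KROut); auto.
      intros a r' s' Ha Hb. apply NNPP. intros Hn. apply Hno. exists a, r', s'. auto.
  -
    apply d_po. intros a x Hx.
    destruct (classic (exists y, In (a, y) lr /\ ~ NCs y x)) as [[y [Hy Hn]]|Hno].
    + exists y. split; auto. apply IH; auto; eapply F_branch; eauto.
    + exfalso. apply Hnc. eapply L_po; eauto.
      intros y Hy. apply NNPP. intros Hn. apply Hno. exists y. auto.
  -
    destruct (classic (exists a r' s', In (a, r') lr /\ In (a, s') ls /\ ~ NCs r' s')) as [[a [r' [s' [Ha [Hb Hn]]]]]|Hno].
    + eapply d_pp; [right; split; reflexivity|exact Ha|exact Hb|].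
      apply IH; auto; eapply F_branch; eauto.
    + exfalso. apply Hnc. eapply (L_pp (length lr) lr ls r s KROut KIn); auto.
      intros a r' s' Ha Hb. apply NNPP. intros Hn. apply Hno. exists a, r', s'. auto.
  -
    apply d_op. intros a x Hx.
    destruct (classic (exists y, In (a, y) ls /\ ~ NCs x y)) as [[y [Hy Hn]]|Hno].
    + exists y. split; auto. apply IH; auto; eapply F_branch; eauto.
    + exfalso. apply Hnc. eapply L_op; eauto.
      intros y Hy. apply NNPP. intros Hn. apply Hno. exists y. auto.
Qed.

Theorem theorem3 : forall rho sigma : contract,
  retractable rho -> retractable sigma ->
  compliant rho sigma -> derives [] rho sigma.
Proof.
  intros rho sigma H1 H2 Hc. eapply (main rho sigma H1 H2 (cnt rho sigma [])); auto.
  - apply F_start; auto.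
  - apply F_start; auto.
  - apply compl_NC. exact Hc.
Qed.
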